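(* For any two finite sets $A_1$ and $A_2$ of lines in $\mathbb{R}^2$, there exists a line $\ell$, bounding closed halfplanes $\ell^+$ and $\ell^-$, and sets $A_i^\sigma\subseteq A_i$ for $i\in\{1,2\}$ and $\sigma\in\{+,-\}$, such that $|A_i^\sigma|\ge |A_i|^{1/2}$ and $V(A_i^\sigma)\subseteq \ell^\sigma$.
   Context: For a finite set $A$ of lines in $\mathbb{R}^2$, $V(A)$ denotes the set of all intersection points of pairs of lines of $A$. *)

(* Defs.v *)
From Stdlib Require Import Reals List.
Import ListNotations.
Open Scope R_scope.

Definition point := (R * R)%type.

Definition is_line (L : point -> Prop) : Prop :=
  exists a b c : R, (a <> 0 \/ b <> 0) /\
    forall x y : R, L (x, y) <-> a * x + b * y = c.

Definition line_set (A : list (point -> Prop)) : Prop :=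
  NoDup A /\ Forall is_line A.

Definition V (A : list (point -> Prop)) (p : point) : Prop :=
  exists L1 L2, In L1 A /\ In L2 A /\ L1 <> L2 /\ L1 p /\ L2 p.

Definition halfplane_plus (a b c : R) (p : point) : Prop :=
  a * fst p + b * snd p >= c.
Definition halfplane_minus (a b c : R) (p : point) : Prop :=
  a * fst p + b * snd p <= c.

Definition sub_line_set (A' A : list (point -> Prop)) : Prop :=
  NoDup A' /\ incl A' A.

(* Main.v *)
Require Import Defs.
From Stdlib Require Import Reals Lra Lia List Classical ClassicalEpsilon FunctionalExtensionality PropExtensionality.
Import ListNotations.
Open Scope R_scope.

Section Mirsky.
Variable T : Type.
Variable Rl : T -> T -> Prop.
Hypothesis Rirr : forall x, ~ Rl x x.
Hypothesis Rtr : forall x y z, Rl x y -> Rl y z -> Rl x z.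

Lemma partition_ex (P : T -> Prop) (X : list T) : NoDup X ->
  exists Y Z, NoDup Y /\ NoDup Z /\ (forall x, In x Y <-> In x X /\ P x) /\
    (forall x, In x Z <-> In x X /\ ~ P x) /\ length X = (length Y + length Z)%nat.
Proof.
  induction X as [|a X IH]; intros HN.
  - exists [], []. simpl. repeat split; try constructor; tauto.
  - inversion HN; subst. destruct (IH H2) as (Y & Z & HY & HZ & EY & EZ & EL).
    destruct (classic (P a)) as [Pa|Pa].
    + exists (a :: Y), Z. split; [|split; [|split; [|split]]].
      * constructor; auto. intro Hi. apply EY in Hi. tauto.
      * auto.
      * intros x; split. intros [<-|Hx]; simpl; auto. apply EY in Hx. tauto.
        intros [[<-|Hx] Px]; simpl; auto. right. apply EY; auto.
      * intros x; split. intros Hx. apply EZ in Hx. simpl. tauto.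
        intros [[<-|Hx] Px]. tauto. apply EZ; auto.
      * simpl. lia.
    + exists Y, (a :: Z). split; [|split; [|split; [|split]]].
      * auto.
      * constructor; auto. intro Hi. apply EZ in Hi. tauto.
      * intros x; split. intros Hx. apply EY in Hx. simpl. tauto.
        intros [[<-|Hx] Px]. tauto. apply EY; auto.
      * intros x; split. intros [<-|Hx]; simpl; auto. apply EZ in Hx. tauto.
        intros [[<-|Hx] Px]; simpl; auto. right. apply EZ; auto.
      * simpl. lia.
Qed.

Lemma exists_max (l : list T) : l <> [] ->
  exists x, In x l /\ forall y, In y l -> ~ Rl x y.
Proof.
  induction l as [|a l IH]; intros Hne. congruence.
  destruct l as [|b l'].
  - exists a. split. simpl; auto. intros y [<-|[]]. apply Rirr.
  - destruct IH as (m & Hm & Hmax). congruence.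
    destruct (classic (Rl m a)) as [Hma|Hma].
    + exists a. split. simpl; auto. intros y [<-|Hy]. apply Rirr.
      intro Hay. apply (Hmax y Hy). eauto.
    + exists m. split. simpl; auto. intros y [<-|Hy]. auto. auto.
Qed.

Definition chain (C : list T) := forall x y, In x C -> In y C -> x <> y -> Rl x y \/ Rl y x.
Definition antichain (D : list T) := forall x y, In x D -> In y D -> ~ Rl x y.

Lemma mirsky_n : forall n (X : list T), (length X <= n)%nat -> NoDup X ->
  exists C D, NoDup C /\ incl C X /\ NoDup D /\ incl D X /\ chain C /\ antichain D /\
    (length X <= length C * length D)%nat.
Proof.
  induction n as [|n IHn]; intros X HL HN.
  - destruct X; [|simpl in HL; lia].
    exists [], []. repeat split; try constructor; unfold incl, chain, antichain; simpl; tauto.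
  - destruct X as [|x0 X0].
    { exists [], []. repeat split; try constructor; unfold incl, chain, antichain; simpl; tauto. }
    set (X := x0 :: X0) in *.
    destruct (partition_ex (fun x => forall y, In y X -> ~ Rl x y) X HN)
      as (D0 & X' & HD0 & HX' & ED0 & EX' & EL).
    assert (D0ne : D0 <> []).
    { destruct (exists_max X) as (m & Hm & Hmax). unfold X; congruence.
      intro E. assert (In m D0) by (apply ED0; auto). rewrite E in H. inversion H. }
    assert (LD0 : (length D0 > 0)%nat) by (destruct D0; [congruence|simpl; lia]).
    assert (HX'n : (length X' <= n)%nat) by lia.
    destruct (IHn X' HX'n HX') as (C' & D' & HC' & IC' & HD' & ID' & CC' & AD' & LL).
    assert (AD0 : antichain D0).
    { intros x y Hx Hy. apply ED0 in Hx. apply ED0 in Hy. apply (proj2 Hx). tauto. }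
    destruct C' as [|c0 C0].
    + destruct D0 as [|m D1]. congruence.
      exists [m], (m :: D1). repeat split.
      * constructor. intros []. constructor.
      * intros z [<-|[]]. apply ED0. simpl; auto.
      * auto.
      * intros z Hz. apply ED0 in Hz. tauto.
      * intros x y [<-|[]] [<-|[]]. tauto.
      * auto.
      * simpl in LL. rewrite EL. change (length [m]) with 1%nat. lia.
    + set (C := c0 :: C0) in *.
      destruct (exists_max C) as (top & Htop & Htopmax). unfold C; congruence.
      assert (Htx : In top X') by auto.
      apply EX' in Htx. destruct Htx as [HtX Htnm].
      apply not_all_ex_not in Htnm. destruct Htnm as [y Hy].
      apply imply_to_and in Hy. destruct Hy as [HyX Hty]. apply NNPP in Hty.
      destruct (partition_ex (fun z => Rl top z) X HN) as (U & U1 & HU & HU1 & EU & EU1 & ELU).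
      destruct (exists_max U) as (m & Hm & Hmmax).
      { intro E. assert (In y U) by (apply EU; auto). rewrite E in H; inversion H. }
      apply EU in Hm. destruct Hm as [HmX Htm].
      assert (HmD0 : In m D0).
      { apply ED0. split; auto. intros z Hz Hmz. apply (Hmmax z). apply EU. split; eauto. auto. }
      assert (Hbelow : forall z, In z C -> Rl z m).
      { intros z Hz. destruct (classic (z = top)) as [->|Hne]. auto.
        destruct (CC' z top Hz Htop Hne) as [H|H]. eauto. exfalso; eapply Htopmax; eauto. }
      assert (HmC : ~ In m C).
      { intro H. apply IC' in H. apply EX' in H. apply ED0 in HmD0. tauto. }
      destruct (Nat.le_ge_cases (length D0) (length D')) as [Hle|Hle].
      * exists (m :: C), D'. repeat split.
        -- constructor; auto.
        -- intros z [<-|Hz]. auto. apply IC' in Hz. apply EX' in Hz. tauto.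
        -- auto.
        -- intros z Hz. apply ID' in Hz. apply EX' in Hz. tauto.
        -- intros a b [<-|Ha] [<-|Hb] Hab. tauto. right; auto. left; auto. apply CC'; auto.
        -- auto.
        -- change (length (m :: C)) with (S (length C)). simpl length in *. nia.
      * exists (m :: C), D0. repeat split.
        -- constructor; auto.
        -- intros z [<-|Hz]. auto. apply IC' in Hz. apply EX' in Hz. tauto.
        -- auto.
        -- intros z Hz. apply ED0 in Hz. tauto.
        -- intros a b [<-|Ha] [<-|Hb] Hab. tauto. right; auto. left; auto. apply CC'; auto.
        -- auto.
        -- change (length (m :: C)) with (S (length C)). simpl length in *. nia.
Qed.

End Mirsky.


Definition coP (L : point -> Prop) (t : R * R * R) : Prop :=
  let '(a, b, k) := t in (a <> 0 \/ b <> 0) /\ forall x y, L (x, y) <-> a * x + b * y = k.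
Definition co (L : point -> Prop) : R * R * R :=
  epsilon (inhabits (0, 0, 0)) (coP L).
Definition ca L := fst (fst (co L)).
Definition cb L := snd (fst (co L)).
Definition ck L := snd (co L).

Lemma co_spec L : is_line L -> (ca L <> 0 \/ cb L <> 0) /\
  forall p, L p <-> ca L * fst p + cb L * snd p = ck L.
Proof.
  intros (a & b & k & Hab & H).
  assert (Hs : coP L (co L)).
  { unfold co. apply epsilon_spec. exists (a, b, k). simpl. auto. }
  unfold ca, cb, ck. destruct (co L) as [[a' b'] k']. simpl in *.
  destruct Hs as [H1 H2]. split; auto. intros [x y]. apply H2.
Qed.

Definition det L1 L2 := ca L1 * cb L2 - ca L2 * cb L1.
Definition cramer L1 L2 : point :=
  ((ck L1 * cb L2 - ck L2 * cb L1) / det L1 L2, (ca L1 * ck L2 - ca L2 * ck L1) / det L1 L2).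

Lemma cramer_on L1 L2 : is_line L1 -> is_line L2 -> det L1 L2 <> 0 ->
  L1 (cramer L1 L2) /\ L2 (cramer L1 L2).
Proof.
  intros H1 H2 D. destruct (co_spec _ H1) as [_ E1]. destruct (co_spec _ H2) as [_ E2].
  split; [apply E1|apply E2]; unfold cramer, det in *; simpl; field; auto.
Qed.

Lemma common_cramer L1 L2 p : is_line L1 -> is_line L2 -> det L1 L2 <> 0 ->
  L1 p -> L2 p -> p = cramer L1 L2.
Proof.
  intros H1 H2 D P1 P2. destruct (co_spec _ H1) as [_ E1]. destruct (co_spec _ H2) as [_ E2].
  apply E1 in P1. apply E2 in P2. destruct p as [x y]. simpl in *.
  unfold cramer, det in *. f_equal.
  - apply (Rmult_eq_reg_r (ca L1 * cb L2 - ca L2 * cb L1)); auto.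
    field_simplify; auto. rewrite <- P1, <- P2. ring.
  - apply (Rmult_eq_reg_r (ca L1 * cb L2 - ca L2 * cb L1)); auto.
    field_simplify; auto. rewrite <- P1, <- P2. ring.
Qed.

Lemma prop_lines (a1 b1 k1 a2 b2 k2 x y : R) :
  (a1 <> 0 \/ b1 <> 0) -> (a2 <> 0 \/ b2 <> 0) -> a1 * b2 - a2 * b1 = 0 ->
  a1 * x + b1 * y = k1 -> a2 * x + b2 * y = k2 ->
  exists l, l <> 0 /\ a2 = l * a1 /\ b2 = l * b1 /\ k2 = l * k1.
Proof.
  intros N1 N2 D P1 P2. destruct N1 as [N|N].
  - exists (a2 / a1). assert (Hb : b2 = a2 / a1 * b1).
    { apply (Rmult_eq_reg_l a1); auto. field_simplify; auto. lra. }
    assert (Ha : a2 = a2 / a1 * a1) by (field; auto).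
    split; [|split; [|split]]; auto.
    + intro Z. rewrite Z in Ha, Hb. destruct N2; lra.
    + rewrite <- P1, <- P2. rewrite Hb. field. auto.
  - exists (b2 / b1). assert (Ha : a2 = b2 / b1 * a1).
    { apply (Rmult_eq_reg_l b1); auto. field_simplify; auto. lra. }
    assert (Hb : b2 = b2 / b1 * b1) by (field; auto).
    split; [|split; [|split]]; auto.
    + intro Z. rewrite Z in Ha, Hb. destruct N2; lra.
    + rewrite <- P1, <- P2. rewrite Ha. field. auto.
Qed.

Lemma det0_eq L1 L2 p : is_line L1 -> is_line L2 -> det L1 L2 = 0 ->
  L1 p -> L2 p -> L1 = L2.
Proof.
  intros H1 H2 D P1 P2. destruct (co_spec _ H1) as [N1 E1]. destruct (co_spec _ H2) as [N2 E2].
  apply E1 in P1. apply E2 in P2. unfold det in D.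
  destruct (prop_lines _ _ _ _ _ _ _ _ N1 N2 D P1 P2) as (l & Hl & Ea & Eb & Ek).
  apply functional_extensionality. intro q. apply propositional_extensionality.
  rewrite E1, E2, Ea, Eb, Ek. split; intro Q.
  - rewrite <- Q. ring.
  - apply (Rmult_eq_reg_l l); auto. rewrite <- Q. ring.
Qed.


Section Frame.
Variables u1 u2 c : R.
Hypothesis Hu : u1 * u1 + u2 * u2 = 1.

Definition al L := ca L * u1 + cb L * u2.
Definition ga L := - ca L * u2 + cb L * u1.
Definition tt L := (ck L - al L * c) / ga L.
Definition mm L := - al L / ga L.
Definition Rel L1 L2 :=
  (ga L1 <> 0 /\ ga L2 <> 0 /\ tt L1 < tt L2 /\ mm L2 < mm L1) \/
  (ga L1 <> 0 /\ ga L2 = 0 /\ al L2 <> 0 /\ c < ck L2 / al L2).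
Definition Xc (p : point) := u1 * fst p + u2 * snd p.
Definition Yc (p : point) := - u2 * fst p + u1 * snd p.

Lemma frame_eq L p : is_line L -> L p -> al L * Xc p + ga L * Yc p = ck L.
Proof.
  intros H P. destruct (co_spec _ H) as [_ E]. apply E in P. rewrite <- P.
  unfold al, ga, Xc, Yc.
  transitivity ((ca L * fst p + cb L * snd p) * (u1 * u1 + u2 * u2)). ring. rewrite Hu. ring.
Qed.

Lemma Yform L p : is_line L -> L p -> ga L <> 0 -> Yc p = tt L + mm L * (Xc p - c).
Proof.
  intros H P G. pose proof (frame_eq L p H P) as E. unfold tt, mm.
  apply (Rmult_eq_reg_l (ga L)); auto. field_simplify; auto. lra.
Qed.

Lemma frame_det L1 L2 : al L1 * ga L2 - al L2 * ga L1 = det L1 L2.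
Proof.
  unfold al, ga, det. transitivity ((ca L1 * cb L2 - ca L2 * cb L1) * (u1 * u1 + u2 * u2)). ring.
  rewrite Hu. ring.
Qed.

Lemma Rel_irr L : ~ Rel L L.
Proof. intros [(_ & _ & H & _)|(H1 & H2 & _)]; [lra|auto]. Qed.

Lemma Rel_tr L1 L2 L3 : Rel L1 L2 -> Rel L2 L3 -> Rel L1 L3.
Proof.
  intros [(A1 & A2 & A3 & A4)|(A1 & A2 & A3 & A4)] [(B1 & B2 & B3 & B4)|(B1 & B2 & B3 & B4)].
  - left. repeat split; auto; lra.
  - right. auto.
  - contradiction.
  - contradiction.
Qed.

Lemma Rel_sound L1 L2 p : is_line L1 -> is_line L2 -> Rel L1 L2 -> L1 p -> L2 p -> c < Xc p.
Proof.
  intros H1 H2 [(A1 & A2 & A3 & A4)|(A1 & A2 & A3 & A4)] P1 P2.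
  - pose proof (Yform _ _ H1 P1 A1). pose proof (Yform _ _ H2 P2 A2).
    assert ((mm L1 - mm L2) * (Xc p - c) = tt L2 - tt L1) by lra.
    destruct (Rle_or_lt (Xc p) c); auto. nra.
  - pose proof (frame_eq _ _ H2 P2) as E. rewrite A2 in E.
    replace (Xc p) with (ck L2 / al L2); auto. rewrite <- E. field. auto.
Qed.

Lemma Rel_complete L1 L2 p : is_line L1 -> is_line L2 -> det L1 L2 <> 0 ->
  L1 p -> L2 p -> c < Xc p -> Rel L1 L2 \/ Rel L2 L1.
Proof.
  intros H1 H2 D P1 P2 Hc. rewrite <- frame_det in D.
  destruct (Req_dec (ga L1) 0) as [G1|G1]; destruct (Req_dec (ga L2) 0) as [G2|G2].
  - rewrite G1, G2 in D. lra.
  - right. right. pose proof (frame_eq _ _ H1 P1) as E. rewrite G1 in E.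
    assert (al L1 <> 0) by (intro Z; rewrite Z, G1 in D; lra).
    repeat split; auto. replace (ck L1 / al L1) with (Xc p); auto. rewrite <- E. field. auto.
  - left. right. pose proof (frame_eq _ _ H2 P2) as E. rewrite G2 in E.
    assert (al L2 <> 0) by (intro Z; rewrite Z, G2 in D; lra).
    repeat split; auto. replace (ck L2 / al L2) with (Xc p); auto. rewrite <- E. field. auto.
  - pose proof (Yform _ _ H1 P1 G1). pose proof (Yform _ _ H2 P2 G2).
    assert (Hm : mm L1 <> mm L2).
    { unfold mm. intro Z. apply D. apply (Rmult_eq_reg_r (/ (ga L1 * ga L2))).
      2:{ apply Rinv_neq_0_compat. apply Rmult_integral_contrapositive; auto. }
      rewrite Rmult_0_l. field_simplify; auto. unfold Rdiv in Z.
      apply (Rmult_eq_compat_r (ga L1 * ga L2)) in Z. field_simplify in Z; auto. lra. }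
    assert ((mm L1 - mm L2) * (Xc p - c) = tt L2 - tt L1) by lra.
    destruct (Rtotal_order (mm L1) (mm L2)) as [Hl|[He|Hl]].
    + right. left. repeat split; auto; nra.
    + contradiction.
    + left. left. repeat split; auto; nra.
Qed.
End Frame.


Definition vl (S : list (point -> Prop)) : list point :=
  flat_map (fun L1 => flat_map (fun L2 =>
    if Req_dec_T (det L1 L2) 0 then [] else [cramer L1 L2]) S) S.

Lemma in_vl S v : In v (vl S) <-> exists L1 L2, In L1 S /\ In L2 S /\ det L1 L2 <> 0 /\ v = cramer L1 L2.
Proof.
  unfold vl. rewrite in_flat_map. split.
  - intros (L1 & H1 & H). rewrite in_flat_map in H. destruct H as (L2 & H2 & H).
    destruct (Req_dec_T (det L1 L2) 0) as [E|E]. inversion H.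
    destruct H as [<-|[]]. exists L1, L2. auto.
  - intros (L1 & L2 & H1 & H2 & D & ->). exists L1. split; auto. rewrite in_flat_map.
    exists L2. split; auto. destruct (Req_dec_T (det L1 L2) 0) as [E|E]. contradiction. simpl; auto.
Qed.

Fixpoint subl {T} (l : list T) : list (list T) :=
  match l with
  | [] => [[]]
  | x :: l' => map (cons x) (subl l') ++ subl l'
  end.

Lemma subl_filter {T} (f : T -> bool) l : In (filter f l) (subl l).
Proof.
  induction l as [|a l IH]; simpl. auto.
  apply in_or_app. destruct (f a). left. apply in_map. auto. right. auto.
Qed.

Lemma subl_prop {T} (l : list T) S : In S (subl l) -> incl S l /\ (NoDup l -> NoDup S).
Proof.
  revert S. induction l as [|a l IH]; simpl; intros S HS.
  - destruct HS as [<-|[]]. split. intros x []. intros; constructor.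
  - apply in_app_or in HS. destruct HS as [HS|HS].
    + apply in_map_iff in HS. destruct HS as (S' & <- & HS). destruct (IH _ HS) as [I N].
      split. intros x [<-|Hx]. simpl; auto. simpl; auto.
      intro HN. inversion HN; subst. constructor; auto.
    + destruct (IH _ HS) as [I N]. split. intros x Hx. simpl; auto.
      intro HN. inversion HN; subst. auto.
Qed.

Definition candl (A : list (point -> Prop)) :=
  filter (fun S => Nat.leb (length A) (length S * length S)) (subl A).

Lemma candl_prop A S : NoDup A -> In S (candl A) ->
  NoDup S /\ incl S A /\ (length A <= length S * length S)%nat.
Proof.
  intros HN H. unfold candl in H. apply filter_In in H. destruct H as [H L].
  apply Nat.leb_le in L. destruct (subl_prop _ _ H). auto.
Qed.

Lemma to_cand A S : NoDup A -> NoDup S -> incl S A -> (length A <= length S * length S)%nat ->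
  exists S', In S' (candl A) /\ forall x, In x S' <-> In x S.
Proof.
  intros HA HS I L.
  set (f := fun x => if excluded_middle_informative (In x S) then true else false).
  assert (Hf : forall x, In x (filter f A) <-> In x S).
  { intro x. rewrite filter_In. unfold f. destruct (excluded_middle_informative (In x S)); split.
    tauto. auto. intros [_ Z]; discriminate. tauto. }
  exists (filter f A). split; auto.
  unfold candl. apply filter_In. split. apply subl_filter. apply Nat.leb_le.
  assert (length (filter f A) = length S).
  { apply Nat.le_antisymm; apply NoDup_incl_length.
    apply NoDup_filter; auto. intros x Hx; apply Hf; auto. auto. intros x Hx; apply Hf; auto. }
  rewrite H. auto.
Qed.

Definition Pside A u1 u2 c := exists S, In S (candl A) /\
  forall v, In v (vl S) -> u1 * fst v + u2 * snd v <= c.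

Lemma det_refl L : det L L = 0.
Proof. unfold det. ring. Qed.

Lemma comb A u1 u2 c : line_set A -> u1 * u1 + u2 * u2 = 1 ->
  Pside A u1 u2 c \/ Pside A (-u1) (-u2) (-c).
Proof.
  intros [HN HF] Hu.
  assert (Hl : forall L, In L A -> is_line L) by (intros L HL; rewrite Forall_forall in HF; auto).
  destruct (mirsky_n _ (Rel u1 u2 c) (Rel_irr u1 u2 c) (Rel_tr u1 u2 c) (length A) A (le_n _) HN)
    as (C & D & NC & IC & ND & ID & CC & AD & LL).
  destruct (Compare_dec.le_lt_dec (length A) (length C * length C)) as [HC|HC].
  - right. destruct (to_cand A C HN NC IC HC) as (S & HS & ES). exists S. split; auto.
    intros v Hv. apply in_vl in Hv. destruct Hv as (L1 & L2 & H1 & H2 & Dt & ->).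
    apply ES in H1. apply ES in H2.
    assert (Ne : L1 <> L2) by (intros ->; apply Dt; apply det_refl).
    destruct (cramer_on L1 L2 (Hl _ (IC _ H1)) (Hl _ (IC _ H2)) Dt) as [P1 P2].
    destruct (CC _ _ H1 H2 Ne) as [R|R].
    + pose proof (Rel_sound u1 u2 c Hu _ _ _ (Hl _ (IC _ H1)) (Hl _ (IC _ H2)) R P1 P2).
      unfold Xc in H. lra.
    + pose proof (Rel_sound u1 u2 c Hu _ _ _ (Hl _ (IC _ H2)) (Hl _ (IC _ H1)) R P2 P1).
      unfold Xc in H. lra.
  - left. assert (HD : (length A <= length D * length D)%nat) by nia.
    destruct (to_cand A D HN ND ID HD) as (S & HS & ES). exists S. split; auto.
    intros v Hv. apply in_vl in Hv. destruct Hv as (L1 & L2 & H1 & H2 & Dt & ->).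
    apply ES in H1. apply ES in H2.
    destruct (cramer_on L1 L2 (Hl _ (ID _ H1)) (Hl _ (ID _ H2)) Dt) as [P1 P2].
    destruct (Rle_or_lt (Xc u1 u2 (cramer L1 L2)) c) as [Hle|Hlt].
    + unfold Xc in Hle. auto.
    + exfalso. destruct (Rel_complete u1 u2 c Hu _ _ _ (Hl _ (ID _ H1)) (Hl _ (ID _ H2)) Dt P1 P2 Hlt) as [R|R].
      * eapply AD. exact H1. exact H2. exact R.
      * eapply AD. exact H2. exact H1. exact R.
Qed.


Lemma cplus f g : continuity f -> continuity g -> continuity (fun t => f t + g t).
Proof. intros; apply continuity_plus; auto. Qed.
Lemma cminus f g : continuity f -> continuity g -> continuity (fun t => f t - g t).
Proof. intros; apply continuity_minus; auto. Qed.
Lemma cmult f g : continuity f -> continuity g -> continuity (fun t => f t * g t).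
Proof. intros; apply continuity_mult; auto. Qed.
Lemma copp f : continuity f -> continuity (fun t => - f t).
Proof. intros; apply continuity_opp; auto. Qed.
Lemma cconst a : continuity (fun _ => a).
Proof. apply continuity_const. intros x y; auto. Qed.
Lemma cabs f : continuity f -> continuity (fun t => Rabs (f t)).
Proof. intros H. apply (continuity_comp f Rabs); auto. apply Rcontinuity_abs. Qed.

Lemma Rmax_form a b : Rmax a b = (a + b + Rabs (a - b)) * / 2.
Proof. unfold Rmax, Rabs. destruct (Rle_dec a b); destruct (Rcase_abs (a - b)); field_simplify; lra. Qed.
Lemma Rmin_form a b : Rmin a b = (a + b - Rabs (a - b)) * / 2.
Proof. unfold Rmin, Rabs. destruct (Rle_dec a b); destruct (Rcase_abs (a - b)); field_simplify; lra. Qed.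

Lemma cmax f g : continuity f -> continuity g -> continuity (fun t => Rmax (f t) (g t)).
Proof.
  intros Hf Hg. replace (fun t => Rmax (f t) (g t)) with (fun t => (f t + g t + Rabs (f t - g t)) * / 2).
  apply cmult. apply cplus. apply cplus; auto. apply cabs, cminus; auto. apply cconst.
  apply functional_extensionality. intro; rewrite Rmax_form; auto.
Qed.
Lemma cmin f g : continuity f -> continuity g -> continuity (fun t => Rmin (f t) (g t)).
Proof.
  intros Hf Hg. replace (fun t => Rmin (f t) (g t)) with (fun t => (f t + g t - Rabs (f t - g t)) * / 2).
  apply cmult. apply cminus. apply cplus; auto. apply cabs, cminus; auto. apply cconst.
  apply functional_extensionality. intro; rewrite Rmin_form; auto.
Qed.

Definition maxl (l : list R) := match l with [] => 0 | x :: l' => fold_right Rmax x l' end.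
Definition minl (l : list R) := match l with [] => 0 | x :: l' => fold_right Rmin x l' end.

Lemma cont_maxl {E} (F : E -> R -> R) (L : list E) : (forall e, In e L -> continuity (F e)) ->
  continuity (fun t => maxl (map (fun e => F e t) L)).
Proof.
  destruct L as [|e L]; simpl; intros H. apply cconst.
  induction L as [|e' L IH]; simpl. apply H; auto.
  apply cmax. apply H; simpl; auto. apply IH. intros e0 [<-|He]; apply H; simpl; auto.
Qed.
Lemma cont_minl {E} (F : E -> R -> R) (L : list E) : (forall e, In e L -> continuity (F e)) ->
  continuity (fun t => minl (map (fun e => F e t) L)).
Proof.
  destruct L as [|e L]; simpl; intros H. apply cconst.
  induction L as [|e' L IH]; simpl. apply H; auto.
  apply cmin. apply H; simpl; auto. apply IH. intros e0 [<-|He]; apply H; simpl; auto.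
Qed.

Lemma fmax_le x l c : fold_right Rmax x l <= c <-> (x <= c /\ forall z, In z l -> z <= c).
Proof.
  induction l as [|y l IH]; simpl. split; [intros; split; [auto|intros z []]|tauto].
  destruct IH as [I1 I2]. unfold Rmax at 1. destruct (Rle_dec y (fold_right Rmax x l)); split.
  - intros H. destruct (I1 H) as [H1 H2]. split; auto. intros z [<-|Hz]. lra. auto.
  - intros [H1 H2]. apply I2. auto.
  - intros H. assert (fold_right Rmax x l <= c) by lra. destruct (I1 H0) as [H1 H2].
    split; auto. intros z [<-|Hz]; auto.
  - intros [H1 H2]. apply H2; auto.
Qed.
Lemma maxl_le l c : l <> [] -> (maxl l <= c <-> forall x, In x l -> x <= c).
Proof.
  destruct l as [|x l]. congruence. intros _. simpl. rewrite fmax_le. split.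
  intros [H1 H2] z [<-|Hz]; auto. intros H. split; auto.
Qed.
Lemma fmin_le x l c : fold_right Rmin x l <= c <-> (x <= c \/ exists z, In z l /\ z <= c).
Proof.
  induction l as [|y l IH]; simpl. split; [tauto|intros [H|(z & [] & _)]; auto].
  destruct IH as [I1 I2]. unfold Rmin at 1. destruct (Rle_dec y (fold_right Rmin x l)); split.
  - intros H. right. exists y. auto.
  - intros [H|(z & [<-|Hz] & Hc)]. assert (fold_right Rmin x l <= c) by (apply I2; auto). lra. auto.
    assert (fold_right Rmin x l <= c) by (apply I2; right; exists z; auto). lra.
  - intros H. destruct (I1 H) as [H1|(z & Hz & Hc)]; auto. right; exists z; auto.
  - intros [H|(z & [<-|Hz] & Hc)]. apply I2; auto. lra. apply I2; right; exists z; auto.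
Qed.
Lemma minl_le l c : l <> [] -> (minl l <= c <-> exists x, In x l /\ x <= c).
Proof.
  destruct l as [|x l]. congruence. intros _. simpl. rewrite fmin_le. split.
  intros [H|(z & Hz & Hc)]. exists x; auto. exists z; auto.
  intros (z & [<-|Hz] & Hc); auto. right; exists z; auto.
Qed.


Definition alpha A u1 u2 :=
  minl (map (fun S => maxl (map (fun v => u1 * fst v + u2 * snd v) (vl S))) (candl A)).
Definition Nondeg A := forall S, In S (candl A) -> vl S <> [].

Lemma filter_true {T} (l : list T) : filter (fun _ => true) l = l.
Proof. induction l; simpl; congruence. Qed.

Lemma candl_self A : In A (candl A).
Proof.
  unfold candl. apply filter_In. split. pose proof (subl_filter (fun _ => true) A) as Hs; rewrite filter_true in Hs; exact Hs.
  apply Nat.leb_le. nia.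
Qed.

Lemma Pside_alpha A u1 u2 c : Nondeg A -> (Pside A u1 u2 c <-> alpha A u1 u2 <= c).
Proof.
  intros ND. unfold alpha, Pside. rewrite minl_le.
  2:{ intro E. apply map_eq_nil in E. pose proof (candl_self A). rewrite E in H. inversion H. }
  split.
  - intros (S & HS & H). exists (maxl (map (fun v => u1 * fst v + u2 * snd v) (vl S))).
    split. apply in_map_iff; exists S; split; auto. apply maxl_le.
    intro E; apply map_eq_nil in E; apply (ND S); auto.
    intros x Hx. apply in_map_iff in Hx. destruct Hx as (v & <- & Hv). auto.
  - intros (x & Hx & Hc). apply in_map_iff in Hx. destruct Hx as (S & <- & HS).
    exists S. split; auto. intros v Hv. rewrite maxl_le in Hc.
    apply Hc. apply in_map_iff; exists v; split; auto. intro E; apply map_eq_nil in E; apply (ND S); auto.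
Qed.

Lemma sweep A u1 u2 : line_set A -> Nondeg A -> u1 * u1 + u2 * u2 = 1 ->
  alpha A u1 u2 + alpha A (-u1) (-u2) <= 0.
Proof.
  intros HA ND Hu. destruct (Rle_or_lt (alpha A u1 u2 + alpha A (-u1) (-u2)) 0) as [H|H]; auto.
  exfalso. set (c := (alpha A u1 u2 - alpha A (-u1) (-u2)) / 2).
  destruct (comb A u1 u2 c HA Hu) as [P|P]; apply Pside_alpha in P; auto; unfold c in P; lra.
Qed.

Lemma cont_alpha A f g : continuity f -> continuity g -> continuity (fun t => alpha A (f t) (g t)).
Proof.
  intros Hf Hg. unfold alpha.
  apply (cont_minl (fun S t => maxl (map (fun v => f t * fst v + g t * snd v) (vl S)))).
  intros S _. apply (cont_maxl (fun v t => f t * fst v + g t * snd v)).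
  intros v _. apply cplus; apply cmult; auto; apply cconst.
Qed.

Definition good A u1 u2 c := Pside A u1 u2 c /\ Pside A (-u1) (-u2) (-c).

Lemma deg_good A u1 u2 c : ~ Nondeg A -> good A u1 u2 c.
Proof.
  intro H. unfold Nondeg in H. apply not_all_ex_not in H. destruct H as [S H].
  apply imply_to_and in H. destruct H as [HS H]. apply NNPP in H.
  split; exists S; split; auto; intros v; rewrite H; intros [].
Qed.

Lemma nondeg_good A u1 u2 c : line_set A -> Nondeg A -> u1 * u1 + u2 * u2 = 1 ->
  alpha A u1 u2 <= c -> c <= - alpha A (-u1) (-u2) -> good A u1 u2 c.
Proof.
  intros HA ND Hu H1 H2. split; apply Pside_alpha; auto. lra.
Qed.

Lemma key A1 A2 : line_set A1 -> line_set A2 ->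
  exists u1 u2 c, u1 * u1 + u2 * u2 = 1 /\ good A1 u1 u2 c /\ good A2 u1 u2 c.
Proof.
  intros H1 H2.
  assert (U : 1 * 1 + 0 * 0 = 1) by ring.
  destruct (classic (Nondeg A1)) as [N1|N1]; destruct (classic (Nondeg A2)) as [N2|N2].
  - set (k := fun t => alpha A1 (cos t) (sin t) + alpha A2 (- cos t) (- sin t)
                      - alpha A2 (cos t) (sin t) - alpha A1 (- cos t) (- sin t)).
    assert (Kc : continuity k).
    { unfold k. repeat apply cminus. apply cplus.
      all: apply cont_alpha; try apply copp; try apply continuity_cos; apply continuity_sin. }
    assert (Kp : k 0 * k PI <= 0).
    { unfold k. rewrite cos_PI, sin_PI, cos_0, sin_0.
      replace (- (-1)) with 1 by ring. replace (- (1)) with (-1) by ring. replace (-0) with 0 by ring.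
      set (x1 := alpha A1 1 0). set (x2 := alpha A2 1 0). set (y1 := alpha A1 (-1) 0). set (y2 := alpha A2 (-1) 0).
      assert (0 <= (x1 + y2 - x2 - y1) * (x1 + y2 - x2 - y1)) by apply Rle_0_sqr. lra. }
    destruct (IVT_cor k 0 PI Kc (Rlt_le _ _ PI_RGT_0) Kp) as (z & _ & Kz).
    assert (Uz : cos z * cos z + sin z * sin z = 1).
    { pose proof (sin2_cos2 z). unfold Rsqr in H. lra. }
    pose proof (sweep A1 _ _ H1 N1 Uz). pose proof (sweep A2 _ _ H2 N2 Uz).
    assert (Uz' : - cos z * - cos z + - sin z * - sin z = 1) by lra.
    unfold k in Kz.
    exists (cos z), (sin z), (Rmax (alpha A1 (cos z) (sin z)) (alpha A2 (cos z) (sin z))).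
    split; auto. split; apply nondeg_good; auto.
    + apply Rmax_l.
    + apply Rmax_lub; lra.
    + apply Rmax_r.
    + apply Rmax_lub; lra.
  - exists 1, 0, (alpha A1 1 0). split; auto. split.
    + apply nondeg_good; auto. lra. pose proof (sweep A1 _ _ H1 N1 U). lra.
    + apply deg_good; auto.
  - exists 1, 0, (alpha A2 1 0). split; auto. split.
    + apply deg_good; auto.
    + apply nondeg_good; auto. lra. pose proof (sweep A2 _ _ H2 N2 U). lra.
  - exists 1, 0, 0. split; auto. split; apply deg_good; auto.
Qed.


Lemma V_vl A S p : line_set A -> incl S A -> V S p -> In p (vl S).
Proof.
  intros [HN HF] I (L1 & L2 & I1 & I2 & Ne & P1 & P2).
  rewrite Forall_forall in HF. pose proof (HF _ (I _ I1)) as HL1. pose proof (HF _ (I _ I2)) as HL2.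
  apply in_vl. exists L1, L2. repeat split; auto.
  - intro D. apply Ne. eapply det0_eq; eauto.
  - apply common_cramer; auto. intro D. apply Ne. eapply det0_eq; eauto.
Qed.

Lemma len_sqrt n m : (n <= m * m)%nat -> INR m >= sqrt (INR n).
Proof.
  intro H. apply Rle_ge. rewrite <- (sqrt_square (INR m)) by apply pos_INR.
  apply sqrt_le_1_alt. rewrite <- mult_INR. apply le_INR. auto.
Qed.

Lemma side A S u1 u2 c : line_set A -> In S (candl A) ->
  (forall v, In v (vl S) -> u1 * fst v + u2 * snd v <= c) ->
  sub_line_set S A /\ INR (length S) >= sqrt (INR (length A)) /\
  (forall p, V S p -> u1 * fst p + u2 * snd p <= c).
Proof.
  intros HA HS H. destruct (candl_prop A S (proj1 HA) HS) as (N & I & L).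
  split; [split; auto|split]. apply len_sqrt; auto.
  intros p Vp. apply H. eapply V_vl; eauto.
Qed.

Theorem mainTheorem3 (A1 A2 : list (point -> Prop))
  (H1 : line_set A1) (H2 : line_set A2) :
  exists a b c : R, (a <> 0 \/ b <> 0) /\
  exists A1p A1m A2p A2m : list (point -> Prop),
    sub_line_set A1p A1 /\ sub_line_set A1m A1 /\
    sub_line_set A2p A2 /\ sub_line_set A2m A2 /\
    INR (length A1p) >= sqrt (INR (length A1)) /\
    INR (length A1m) >= sqrt (INR (length A1)) /\
    INR (length A2p) >= sqrt (INR (length A2)) /\
    INR (length A2m) >= sqrt (INR (length A2)) /\
    (forall p, V A1p p -> halfplane_plus a b c p) /\
    (forall p, V A1m p -> halfplane_minus a b c p) /\
    (forall p, V A2p p -> halfplane_plus a b c p) /\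
    (forall p, V A2m p -> halfplane_minus a b c p).
Proof.
  destruct (key A1 A2 H1 H2) as (u1 & u2 & c & Hu & [(S1m & HS1m & E1m) (S1p & HS1p & E1p)]
                                   & [(S2m & HS2m & E2m) (S2p & HS2p & E2p)]).
  exists u1, u2, c. split.
  { destruct (Req_dec u1 0) as [Z1|Z1]; auto. destruct (Req_dec u2 0) as [Z2|Z2]; auto.
    rewrite Z1, Z2 in Hu. lra. }
  destruct (side _ _ _ _ _ H1 HS1m E1m) as (Sa & La & Va).
  destruct (side _ _ _ _ _ H1 HS1p E1p) as (Sb & Lb & Vb).
  destruct (side _ _ _ _ _ H2 HS2m E2m) as (Sc & Lc & Vc).
  destruct (side _ _ _ _ _ H2 HS2p E2p) as (Sd & Ld & Vd).
  exists S1p, S1m, S2p, S2m.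
  do 8 (split; [assumption|]).
  unfold halfplane_plus, halfplane_minus.
  split; [|split; [|split]]; intros p Vp.
  - apply Vb in Vp. lra.
  - apply Va in Vp. lra.
  - apply Vd in Vp. lra.
  - apply Vc in Vp. lra.
Qed.
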